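(* Assume $\ell=d$ and that $B_1,B_2,R_1,R_2$ (and $B_1+\bar B_1,B_2+\bar B_2,R_1+\bar R_1,R_2+\bar R_2$) are invertible. Let $P^o\in\mathbb R^{d\times d}$ solve $$P^o=\gamma(A^\top P^o+2Q)\big(A+(B_1\Gamma_1+B_2\Gamma_2)P^o\big),\qquad \Gamma_1=-\tfrac12R_1^{-1}B_1^\top,\ \Gamma_2=\tfrac12R_2^{-1}B_2^\top,$$ and set $P^c=\frac12A^\top P^o+Q$. If $A^\top P^o=(P^o)^\top A$ and the symmetric matrices $P^c$ and $(P^c)^{-1}+\gamma(B_1R_1^{-1}B_1^\top-B_2R_2^{-1}B_2^\top)$ are invertible, then $P^c\in\mathcal S^d$ is a solution of $0=\mathcal M(P^c)-\mathcal L(P^c)\mathcal N(P^c)^{-1}\mathcal L(P^c)^\top$.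
   Context: $\mathcal S^d$: symmetric $d\times d$ matrices. Fix $d\ge1$, $\gamma\in(0,1)$, $A,\bar A\in\mathbb R^{d\times d}$, $B_1,\bar B_1,B_2,\bar B_2\in\mathbb R^{d\times d}$, $Q\in\mathcal S^d$, symmetric $R_1,\bar R_1,R_2,\bar R_2\in\mathbb R^{d\times d}$. For $P\in\mathcal S^d$: $\mathcal M(P)=\gamma A^\top PA-P+Q$, $\mathcal L_i(P)=\gamma A^\top PB_i$, $\mathcal L_{12}(P)=\gamma B_1^\top PB_2$, $\mathcal N_1(P)=\gamma B_1^\top PB_1+R_1$, $\mathcal N_2(P)=\gamma B_2^\top PB_2-R_2$, $\mathcal L(P)=[\mathcal L_1(P),\mathcal L_2(P)]$, $\mathcal N(P)=\begin{bmatrix}\mathcal N_1(P)&\mathcal L_{12}(P)\\\mathcal L_{12}(P)^\top&\mathcal N_2(P)\end{bmatrix}$. *)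

(* Defs.v *)
From HB Require Import structures.
From mathcomp Require Import all_boot all_order all_algebra.
Set Implicit Arguments. Unset Strict Implicit. Unset Printing Implicit Defensive.
Import Order.TTheory GRing.Theory Num.Theory.
Local Open Scope ring_scope.

Section Ops.
Variables (R : realFieldType) (d : nat) (gamma : R).
Variables (A B1 B2 Q R1 R2 : 'M[R]_d).

Definition symmx (P : 'M[R]_d) : Prop := P^T = P.

Definition Mop (P : 'M[R]_d) : 'M[R]_d := gamma *: (A^T *m P *m A) - P + Q.
Definition L1op (P : 'M[R]_d) : 'M[R]_d := gamma *: (A^T *m P *m B1).
Definition L2op (P : 'M[R]_d) : 'M[R]_d := gamma *: (A^T *m P *m B2).
Definition L12op (P : 'M[R]_d) : 'M[R]_d := gamma *: (B1^T *m P *m B2).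
Definition N1op (P : 'M[R]_d) : 'M[R]_d := gamma *: (B1^T *m P *m B1) + R1.
Definition N2op (P : 'M[R]_d) : 'M[R]_d := gamma *: (B2^T *m P *m B2) - R2.
Definition Lop (P : 'M[R]_d) : 'M[R]_(d, d + d) := row_mx (L1op P) (L2op P).
Definition Nop (P : 'M[R]_d) : 'M[R]_(d + d) :=
  block_mx (N1op P) (L12op P) (L12op P)^T (N2op P).
End Ops.

(* Main.v *)
Require Import Defs.
From HB Require Import structures.
From mathcomp Require Import all_boot all_order all_algebra.
Import Order.TTheory GRing.Theory Num.Theory.
Local Open Scope ring_scope.

Section W.
Variables (R : realFieldType) (d n : nat) (g : R) (P S : 'M[R]_d)
  (B : 'M[R]_(d, n)) (Rd Rdi : 'M[R]_n).
Hypotheses (hR : Rd *m Rdi = 1%:M) (hS : B *m Rdi *m B^T = S)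
  (hP : P \in unitmx) (hK : invmx P + g *: S \in unitmx).

Lemma E1 : invmx (invmx P + g *: S) = P - g *: (P *m S *m invmx (invmx P + g *: S)).
Proof.
set Ki := invmx _.
apply/eqP; rewrite eq_sym subr_eq; apply/eqP.
have e : P = P *m (invmx P + g *: S) *m Ki by rewrite -mulmxA mulmxV ?mulmx1.
by rewrite {1}e mulmxDr mulmxV // mulmxDl mul1mx -(scalemxAr g P S) -scalemxAl.
Qed.

Lemma E2 : invmx (invmx P + g *: S) = P - g *: (invmx (invmx P + g *: S) *m S *m P).
Proof.
set Ki := invmx _.
apply/eqP; rewrite eq_sym subr_eq; apply/eqP.
have e : P = Ki *m ((invmx P + g *: S) *m P) by rewrite mulmxA mulVmx ?mul1mx.
by rewrite {1}e mulmxDl mulVmx // mulmxDr mulmx1 -(scalemxAl g S P) -scalemxAr mulmxA.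
Qed.

Definition Ninv := Rdi - g *: (Rdi *m B^T *m invmx (invmx P + g *: S) *m B *m Rdi).

Lemma wood : (Rd + g *: (B^T *m P *m B)) *m Ninv = 1%:M.
Proof.
rewrite /Ninv; set Ki := invmx _.
have h1 : Rd *m (Rdi *m B^T *m Ki *m B *m Rdi) = B^T *m Ki *m B *m Rdi.
  by rewrite !mulmxA hR mul1mx.
have h2 : B^T *m P *m B *m (Rdi *m B^T *m Ki *m B *m Rdi)
   = B^T *m (P *m S *m Ki) *m B *m Rdi.
  by rewrite -hS !mulmxA.
rewrite mulmxDl !mulmxBr hR -scalemxAr h1 -scalemxAl -scalemxAl -!scalemxAr h2.
have E1' : Ki = P - g *: (P *m S *m Ki) := E1.
have h3 : B^T *m Ki *m B *m Rdi = B^T *m P *m B *m Rdi - g *: (B^T *m (P *m S *m Ki) *m B *m Rdi).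
  by rewrite {1}E1' !(mulmxBr, mulmxBl) -!(scalemxAr, scalemxAl).
by rewrite h3 scalerBr subrK.
Qed.

Lemma quad : g *: (P *m (B *m Ninv *m B^T) *m P) = P - invmx (invmx P + g *: S).
Proof.
rewrite /Ninv; set Ki := invmx _.
have E1' : Ki = P - g *: (P *m S *m Ki) := E1.
have E2' : Ki = P - g *: (Ki *m S *m P) := E2.
have h1 : B *m (Rdi - g *: (Rdi *m B^T *m Ki *m B *m Rdi)) *m B^T = S - g *: (S *m Ki *m S).
  by rewrite mulmxBr mulmxBl -scalemxAr -scalemxAl -hS !mulmxA.
have h2 : P *m S *m Ki = P *m (S - g *: (S *m Ki *m S)) *m P.
  by rewrite {1}E2' !(mulmxBr, mulmxBl) -!(scalemxAr, scalemxAl) !mulmxA.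
by rewrite h1 -h2 {2}E1' opprB addrC subrK.
Qed.
End W.


Theorem mainTheorem15 (R : realFieldType) (d : nat) (gamma : R)
  (A Abar B1 B1bar B2 B2bar Q R1 R1bar R2 R2bar Po : 'M[R]_d) :
  (0 < d)%N -> 0 < gamma < 1 ->
  symmx Q -> symmx R1 -> symmx R1bar -> symmx R2 -> symmx R2bar ->
  B1 \in unitmx -> B2 \in unitmx -> R1 \in unitmx -> R2 \in unitmx ->
  B1 + B1bar \in unitmx -> B2 + B2bar \in unitmx ->
  R1 + R1bar \in unitmx -> R2 + R2bar \in unitmx ->
  let Gamma1 := - (1/2 : R) *: (invmx R1 *m B1^T) in
  let Gamma2 := (1/2 : R) *: (invmx R2 *m B2^T) in
  Po = gamma *: ((A^T *m Po + 2%:R *: Q) *m (A + (B1 *m Gamma1 + B2 *m Gamma2) *m Po)) ->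
  let Pc := (1/2 : R) *: (A^T *m Po) + Q in
  A^T *m Po = Po^T *m A ->
  Pc \in unitmx ->
  invmx Pc + gamma *: (B1 *m invmx R1 *m B1^T - B2 *m invmx R2 *m B2^T) \in unitmx ->
  [/\ symmx Pc,
      Nop gamma B1 B2 R1 R2 Pc \in unitmx &
      0 = Mop gamma A Q Pc
          - Lop gamma A B1 B2 Pc *m invmx (Nop gamma B1 B2 R1 R2 Pc)
            *m (Lop gamma A B1 B2 Pc)^T].
Proof.
move=> _ _ sQ sR1 _ sR2 _ _ _ uR1 uR2 _ _ _ _ G1 G2 hPo Pc hsym uPc uK.
set S := B1 *m invmx R1 *m B1^T - B2 *m invmx R2 *m B2^T in uK.
have sPc : symmx Pc.
  by rewrite /symmx /Pc linearD linearZ /= trmx_mul trmxK -hsym sQ.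
set Bm := row_mx B1 B2.
set Rd := block_mx R1 0 0 (-R2).
set Rdi := block_mx (invmx R1) 0 0 (- invmx R2).
have hR : Rd *m Rdi = 1%:M.
  rewrite /Rd /Rdi mulmx_block !mul0mx !mulmx0 !addr0 !add0r mulNmx mulmxN opprK.
  by rewrite !mulmxV // (scalar_mx_block d d).
have hS : Bm *m Rdi *m Bm^T = S.
  rewrite /Bm /Rdi mul_row_block tr_row_mx mul_row_col !mulmx0 addr0 add0r.
  by rewrite mulmxN mulNmx.
have hN : Nop gamma B1 B2 R1 R2 Pc = Rd + gamma *: (Bm^T *m Pc *m Bm).
  rewrite /Bm /Rd tr_row_mx mul_col_mx mul_col_row scale_block_mx add_block_mx.
  rewrite /Nop /N1op /N2op /L12op; congr block_mx.
  - by rewrite addrC.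
  - by rewrite add0r.
  - by rewrite add0r linearZ /= !trmx_mul trmxK sPc mulmxA.
  - by rewrite addrC.
have W := @wood _ _ _ gamma Pc S Bm Rd Rdi hR hS uPc uK.
rewrite -hN in W.
have [uN _] := mulmx1_unit W.
have hNi : invmx (Nop gamma B1 B2 R1 R2 Pc) = @Ninv _ _ _ gamma Pc S Bm Rdi.
  by rewrite -[LHS]mulmx1 -W mulmxA mulVmx // mul1mx.
split => //.
have hL : Lop gamma A B1 B2 Pc = gamma *: (A^T *m Pc *m Bm).
  by rewrite /Lop /L1op /L2op /Bm mul_mx_row scale_row_mx.
have hLt : (Lop gamma A B1 B2 Pc)^T = gamma *: (Bm^T *m Pc *m A).
  by rewrite hL linearZ /= !trmx_mul trmxK sPc mulmxA.
have Q' := @quad _ _ _ gamma Pc S Bm Rdi hS uPc uK.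
set Ni := Ninv _ _ _ _ _ _ _ _ in hNi Q'.
have hprod : gamma *: (A^T *m Pc *m Bm) *m Ni *m (gamma *: (Bm^T *m Pc *m A))
   = gamma *: (A^T *m (gamma *: (Pc *m (Bm *m Ni *m Bm^T) *m Pc)) *m A).
  by rewrite -!scalemxAl -!scalemxAr -!scalemxAl !mulmxA.
rewrite hNi hLt hL hprod Q' /Mop.
set Ki := invmx _.
have h2 : (2%:R : R) * (1/2) = 1 by rewrite mul1r mulfV // pnatr_eq0.
have hA2 : A^T *m Po + 2%:R *: Q = 2%:R *: Pc.
  by rewrite /Pc scalerDr scalerA h2 scale1r.
have hG : B1 *m G1 + B2 *m G2 = - (1/2) *: S.
  rewrite /G1 /G2 /S -!scalemxAr !mulmxA scalerBr !scaleNr opprK; done.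
have hiP : invmx Pc *m Po = (2%:R * gamma) *: A - gamma *: (S *m Po).
  rewrite {1}hPo hA2 hG -scalemxAr mulmxA -scalemxAr mulVmx // -scalemxAl mul1mx.
  by rewrite -scalemxAl scalerA scalerDr scalerA [gamma * 2%:R]mulrC mulrN mulrAC h2 mul1r scaleNr.
have hKPo : (invmx Pc + gamma *: S) *m Po = (2%:R * gamma) *: A.
  by rewrite mulmxDl hiP -scalemxAl subrK.
have key : gamma *: (Ki *m A) = (1/2) *: Po.
  have e : Po = Ki *m ((invmx Pc + gamma *: S) *m Po) by rewrite mulmxA mulVmx // mul1mx.
  by rewrite {1}e hKPo -scalemxAr scalerA mulrA [1/2 * _]mulrC h2 mul1r.
have e2 : gamma *: (A^T *m (Pc - Ki) *m A) = gamma *: (A^T *m Pc *m A) - (1/2) *: (A^T *m Po).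
  by rewrite mulmxBr mulmxBl scalerBr -[A^T *m Ki *m A]mulmxA (scalemxAr gamma (A^T) (Ki *m A)) key -scalemxAr.
rewrite e2 {2}/Pc.
by rewrite opprD addrA subrK subrr.
Qed.
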